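(* Let $\lambda=(\lambda_0,\lambda_1,\dots)\in\mathbf{W}(\mathcal{O}_K)$ and let $(\phi_0,\phi_1,\dots)\in\mathcal{O}_K^{\mathbb{N}}$ be its phantom vector. Then $\phi_j\to0$ in $\mathcal{O}_K$ if and only if $|\lambda_j|<1$ for all $j\ge0$.
   Context: $K$ is a field of characteristic $0$, complete for a non-archimedean absolute value $|\cdot|$, residue field of characteristic $p>0$; $\mathcal{O}_K=\{|x|\le1\}$. $\mathbf{W}(\mathcal{O}_K)$ is the ring of $p$-typical Witt vectors (of infinite length) with entries in $\mathcal{O}_K$; the phantom vector of $\lambda$ is given by $\phi_m=\lambda_0^{p^m}+p\lambda_1^{p^{m-1}}+\cdots+p^m\lambda_m$. *)

(* Defs.v *)
From HB Require Import structures.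
From mathcomp Require Import all_boot all_order all_algebra.
From mathcomp Require Import reals.
Set Implicit Arguments. Unset Strict Implicit. Unset Printing Implicit Defensive.
Import Order.TTheory GRing.Theory Num.Theory.
Local Open Scope ring_scope.

Record nonarch_abs (K : fieldType) (R : realType) (abs : K -> R) : Prop := {
  abs_ge0 : forall x, 0 <= abs x;
  abs_eq0 : forall x, (abs x == 0) = (x == 0);
  absM : forall x y, abs (x * y) = abs x * abs y;
  abs_ultra : forall x y, abs (x + y) <= Num.max (abs x) (abs y)
}.

Definition abs_cvg (K : fieldType) (R : realType) (abs : K -> R)
  (u : nat -> K) (l : K) : Prop :=
  forall e : R, 0 < e -> exists N : nat, forall n, (N <= n)%N -> abs (u n - l) < e.

Definition abs_cauchy (K : fieldType) (R : realType) (abs : K -> R)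
  (u : nat -> K) : Prop :=
  forall e : R, 0 < e -> exists N : nat,
    forall m n, (N <= m)%N -> (N <= n)%N -> abs (u m - u n) < e.

Definition abs_complete (K : fieldType) (R : realType) (abs : K -> R) : Prop :=
  forall u : nat -> K, abs_cauchy abs u -> exists l, abs_cvg abs u l.

(* The valuation ring O_K and elements of W(O_K) (p-typical Witt vectors of
   infinite length, given by their components). *)
Definition in_OK (K : fieldType) (R : realType) (abs : K -> R) (x : K) : Prop :=
  abs x <= 1.

Definition phantom_vector (K : fieldType) (p : nat) (lam : nat -> K) (m : nat) : K :=
  \sum_(i < m.+1) (p%:R ^+ i) * (lam i) ^+ (p ^ (m - i)).
Arguments phantom_vector : clear implicits.

(* Main.v *)
Require Import Defs.
From HB Require Import structures.
From mathcomp Require Import all_boot all_order all_algebra.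
From mathcomp Require Import reals.
From mathcomp Require Import ring lra zify.
Import Order.TTheory GRing.Theory Num.Theory.
Local Open Scope ring_scope.
Lemma bern (R : realType) n (d : R) : 0 <= d -> 1 + n%:R * d <= (1 + d) ^+ n.
Proof.
move=> d0; elim: n => [|n IH]; first by rewrite mul0r addr0 expr0.
rewrite exprSr -natr1.
have h0 : 0 <= n%:R * d by rewrite mulr_ge0.
have h1 : 1 + n%:R * d <= (1+d)^+n := IH.
nra.
Qed.

Lemma pow_small (R : realType) (c e : R) : 0 <= c -> c < 1 -> 0 < e ->
  exists N : nat, forall n, (N <= n)%N -> c ^+ n < e.
Proof.
move=> c0 c1 e0.
have [->|cn0] := eqVneq c 0.
  exists 1%N => n n1; rewrite expr0n; case: n n1 => [|n] //= _.
have cp : 0 < c by rewrite lt_def cn0 c0.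
set d := c^-1 - 1.
have dp : 0 < d by rewrite /d subr_gt0 invf_gt1.
have hb := archi_boundP (x := e^-1 / d).
have : 0 <= e^-1 / d by rewrite divr_ge0 // ?invr_ge0 ltW.
move/hb => {hb} hb.
exists (Num.bound (e^-1/d)) => n Hn.
have cn : c ^+ n <= c ^+ (Num.bound (e^-1/d)) by apply: ler_wiXn2l => //; exact: ltW.
apply: le_lt_trans cn _.
set N := Num.bound _ in hb *.
have hB := @bern R N d (ltW dp).
have e1 : c * (1 + d) = 1 by rewrite /d addrC subrK mulfV.
have eq1 : c ^+ N * (1 + d) ^+ N = 1 by rewrite -exprMn e1 expr1n.
have hNd : e^-1 < N%:R * d by rewrite -ltr_pdivrMr.
have hee : e * e^-1 = 1 by rewrite mulfV // gt_eqF.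
have cN0 : 0 <= c ^+ N by rewrite exprn_ge0.
have h2 : c ^+ N * (1 + N%:R * d) <= 1 by rewrite -[X in _ <= X]eq1; exact: ler_wpM2l.
have : e * (N%:R * d) > 1 by rewrite -[X in X < _]hee ltr_pM2l.
nra.
Qed.
Set Implicit Arguments.
Section A.
Variables (K : fieldType) (R : realType) (abs : K -> R).
Hypothesis Habs : nonarch_abs abs.

Lemma abs1 : abs 1 = 1.
Proof.
have h := absM Habs 1 1. rewrite mulr1 in h.
have n0 : abs 1 != 0 by rewrite (abs_eq0 Habs) oner_neq0.
have : abs 1 * (abs 1 - 1) = 0 by rewrite mulrBr -h mulr1 subrr.
by move/eqP; rewrite mulf_eq0 (negbTE n0) subr_eq0 => /eqP.
Qed.

Lemma absN x : abs (- x) = abs x.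
Proof.
have h := absM Habs (-1) (-1). rewrite mulrNN mulr1 abs1 in h.
have g := abs_ge0 Habs (-1).
have e : abs (-1) = 1.
  have : (abs (-1) - 1) * (abs (-1) + 1) = 0 by rewrite -subr_sqr expr2 -h expr1n subrr.
  move/eqP; rewrite mulf_eq0 => /orP[/eqP|]; first by move/eqP; rewrite subr_eq0 => /eqP.
  by rewrite gt_eqF // ltr_wpDl.
by rewrite -mulN1r absM // e mul1r.
Qed.

Lemma absX x n : abs (x ^+ n) = abs x ^+ n.
Proof. elim: n => [|n IH]; first by rewrite !expr0 abs1. by rewrite !exprS absM // IH. Qed.

Lemma abs_sum_lt (s : seq nat) (F : nat -> K) e : 0 < e ->
  (forall i, i \in s -> abs (F i) < e) -> abs (\sum_(i <- s) F i) < e.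
Proof.
move=> e0; elim: s => [|a s IH] H; first by rewrite big_nil; have /eqP -> : abs 0 == 0 by rewrite (abs_eq0 Habs).
rewrite big_cons; apply: le_lt_trans (abs_ultra Habs _ _) _.
rewrite gt_max H ?mem_head // IH // => i si; apply: H; by rewrite in_cons si orbT.
Qed.

Lemma abs_sum_le (s : seq nat) (F : nat -> K) e : 0 <= e ->
  (forall i, i \in s -> abs (F i) <= e) -> abs (\sum_(i <- s) F i) <= e.
Proof.
move=> e0; elim: s => [|a s IH] H.
  by rewrite big_nil; have /eqP -> : abs 0 == 0 by rewrite (abs_eq0 Habs).
rewrite big_cons; apply: le_trans (abs_ultra Habs _ _) _.
rewrite ge_max H ?mem_head // IH // => i si; apply: H; by rewrite in_cons si orbT.
Qed.

Lemma abs_sub_ge x y : abs x <= Num.max (abs (x + y)) (abs y).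
Proof. by rewrite -{1}(addrK y x) -(absN y) abs_ultra. Qed.

End A.
Section B.
Variables (K : fieldType) (R : realType) (abs : K -> R) (p : nat).
Hypothesis Habs : nonarch_abs abs.
Hypothesis Hp : prime p.
Hypothesis Hres : abs (p%:R) < 1.
Variable lam : nat -> K.
Hypothesis Hlam : forall i, in_OK abs (lam i).

Definition term m i := (p%:R : K) ^+ i * lam i ^+ (p ^ (m - i)).

Lemma absP0 : 0 <= abs (p%:R : K). Proof. exact: abs_ge0. Qed.

Lemma term_abs m i : abs (term m i) = abs (p%:R : K) ^+ i * abs (lam i) ^+ (p ^ (m - i)).
Proof. by rewrite /term (absM Habs) !(absX Habs). Qed.

Lemma term_le1 m i : abs (term m i) <= abs (p%:R : K) ^+ i.
Proof.
rewrite term_abs; rewrite -{2}(mulr1 (_ ^+ i)); apply: ler_wpM2l.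
  by rewrite exprn_ge0 // absP0.
by rewrite exprn_ile1 // ?(abs_ge0 Habs) // Hlam.
Qed.

Lemma term_le2 m i : abs (term m i) <= abs (lam i) ^+ (p ^ (m - i)).
Proof.
rewrite term_abs; rewrite -{2}(mul1r (_ ^+ (p ^ _))); apply: ler_wpM2r.
  by rewrite exprn_ge0 // (abs_ge0 Habs).
by rewrite exprn_ile1 // ?absP0 // ltW.
Qed.

Lemma head_small k : (forall i, (i < k)%N -> abs (lam i) < 1) ->
  forall e, 0 < e -> exists M, forall m, (M <= m)%N ->
    abs (\sum_(0 <= i < k) term m i) < e.
Proof.
elim: k => [|k IH] Hk e e0.
  exists 0%N => m _; rewrite big_geq //.
  by have /eqP -> : abs 0 == 0 by rewrite (abs_eq0 Habs).
have [M1 HM1] := IH (fun i ik => Hk i (ltnW ik)) e e0.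
have [N HN] := @pow_small R _ _ (abs_ge0 Habs (lam k)) (Hk k (ltnSn k)) e0.
exists (maxn M1 (k + N)) => m; rewrite geq_max => /andP[m1 m2].
rewrite big_nat_recr //=; apply: le_lt_trans (abs_ultra Habs _ _) _.
rewrite gt_max HM1 //=; apply: le_lt_trans (term_le2 _ _) _; apply: HN.
apply: leq_trans (ltnW (ltn_expl _ (prime_gt1 Hp))).
by rewrite leq_subRL // ?(leq_trans (leq_addr _ _) m2).
Qed.

End B.
Unset Implicit Arguments.
Theorem lemma2p2p4 (K : fieldType) (R : realType) (abs : K -> R) (p : nat)
  (Habs : nonarch_abs abs) (Hcomplete : abs_complete abs)
  (Hchar0 : forall n : nat, (0 < n)%N -> n%:R != 0 :> K)
  (Hp : prime p) (Hres : abs (p%:R) < 1)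
  (lam : nat -> K) (Hlam : forall i, in_OK abs (lam i)) :
  abs_cvg abs (@phantom_vector K p lam) 0 <-> (forall j, abs (lam j) < 1).
Proof.
have phE : forall m, phantom_vector K p lam m = \sum_(0 <= i < m.+1) @term K p lam m i.
  by move=> m; rewrite /phantom_vector big_mkord.
have ap0 : 0 <= abs (p%:R : K) := abs_ge0 Habs _.
have apn0 : abs (p%:R : K) != 0 by rewrite (abs_eq0 Habs) Hchar0 // prime_gt0.
have app : 0 < abs (p%:R : K) by rewrite lt_def apn0 ap0.
split.
- move=> Hc; suff H : forall n i, (i < n)%N -> abs (lam i) < 1.
    by move=> j; apply: (H j.+1).
  elim=> [//|j IH] i; rewrite ltnS leq_eqVlt => /orP[/eqP ->|]; last exact: IH.
  rewrite ltNge; apply/negP => H1.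
  have Hj1 : abs (lam j) = 1 by apply/eqP; rewrite eq_le H1 Hlam.
  set ep := abs (p%:R : K) ^+ j.
  have ep0 : 0 < ep by rewrite exprn_gt0.
  have [M HM] := @head_small _ _ _ p Habs Hp Hres lam j IH ep ep0.
  have [N HN] := Hc ep ep0.
  set m := (M + N + j)%N.
  have HmN : (N <= m)%N by rewrite /m; lia.
  have HmM : (M <= m)%N by rewrite /m; lia.
  have Hjm : (j < m.+1)%N by rewrite /m; lia.
  have := HN m HmN; rewrite subr0 phE (@big_cat_nat _ _ _ j) ?(ltnW Hjm) //=.
  rewrite [X in _ + X]big_ltn //.
  set hd := \sum_(0 <= i < j) _; set tl := \sum_(j.+1 <= i < m.+1) _.
  move=> Hphi.
  have Ht : abs (@term K p lam m j) = ep by rewrite (@term_abs _ _ _ p Habs lam) Hj1 expr1n mulr1.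
  have Htl : abs tl < ep.
    rewrite /tl; apply: (abs_sum_lt Habs) => // i0; rewrite mem_index_iota => /andP[ji _].
    apply: le_lt_trans (@term_le1 _ _ _ p Habs lam Hlam _ _) _.
    apply: (@le_lt_trans _ _ (abs (p%:R : K) ^+ j.+1)).
      by apply: ler_wiXn2l => //; exact: ltW.
    by rewrite exprSr gtr_pMr ?exprn_gt0.
  have Hht : abs (hd + tl) < ep.
    apply: le_lt_trans (abs_ultra Habs _ _) _; by rewrite gt_max HM.
  have := abs_sub_ge Habs (@term K p lam m j) (hd + tl).
  rewrite Ht addrCA.
  have : Num.max (abs (hd + (@term K p lam m j + tl))) (abs (hd + tl)) < ep by rewrite gt_max Hphi.
  by move=> /lt_le_trans h /h; rewrite ltxx.
- move=> H e e0.
  have [k Hk] := @pow_small R _ _ ap0 Hres e0.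
  have [M HM] := @head_small _ _ _ p Habs Hp Hres lam k (fun i _ => H i) e e0.
  exists (maxn M k) => m; rewrite geq_max => /andP[mM mk].
  rewrite subr0 phE (@big_cat_nat _ _ _ k) ?(leq_trans mk (leqnSn m)) //=.
  apply: le_lt_trans (abs_ultra Habs _ _) _; rewrite gt_max HM //=.
  apply: (abs_sum_lt Habs) => // i; rewrite mem_index_iota => /andP[ki _].
  apply: le_lt_trans (@term_le1 _ _ _ p Habs lam Hlam _ _) _; exact: Hk.
Qed.
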